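(* Let $L$ be a finite monolithic primitive group whose socle $N$ is non-abelian, let $k'$ be a positive integer, and let $L_{k'}$ be the crown-based power of $L$ of size $k'$, whose socle is $N^{k'}$. If $H'$ is a core-free subgroup of $L_{k'}$ with $H'\le N^{k'}$, then $|N^{k'}:H'|\ge 5^{k'}$.
   Context: All groups are finite. A group $L$ is primitive if it has a maximal subgroup with trivial core; it is monolithic primitive if moreover it has a unique minimal normal subgroup, its socle $N=\mathrm{soc}(L)$. For a positive integer $k$, the crown-based power of $L$ of size $k$ is $L_k:=\{(l_1,\ldots,l_k)\in L^k\mid l_1\equiv\cdots\equiv l_k \pmod N\}=N^k\,\mathrm{diag}(L^k)$. A subgroup $H'$ of a group $G$ is core-free if $\bigcap_{g\in G}(H')^g=1$. *)

(* Defs.v *)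
From HB Require Import structures.
From mathcomp Require Import all_boot all_fingroup all_solvable.
Set Implicit Arguments. Unset Strict Implicit. Unset Printing Implicit Defensive.
Local Open Scope group_scope.

Definition gpow (gT : finGroupType) (k : nat) := {ffun 'I_k -> gT}.

Section GPow.
Variables (gT : finGroupType) (k : nat).
HB.instance Definition _ := Finite.on (gpow gT k).

Definition gpow_mul (x y : gpow gT k) : gpow gT k := [ffun i => x i * y i].
Definition gpow_one : gpow gT k := [ffun => 1].
Definition gpow_inv (x : gpow gT k) : gpow gT k := [ffun i => (x i)^-1].

Lemma gpow_mulA : associative gpow_mul.
Proof. by move=> x y z; apply/ffunP=> i; rewrite !ffunE mulgA. Qed.
Lemma gpow_mul1 : left_id gpow_one gpow_mul.
Proof. by move=> x; apply/ffunP=> i; rewrite !ffunE mul1g. Qed.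
Lemma gpow_mulV : left_inverse gpow_one gpow_inv gpow_mul.
Proof. by move=> x; apply/ffunP=> i; rewrite !ffunE mulVg. Qed.

HB.instance Definition _ :=
  Finite_isGroup.Build (gpow gT k) gpow_mulA gpow_mul1 gpow_mulV.
End GPow.

Definition primitive (gT : finGroupType) (L : {set gT}) :=
  exists2 M : {group gT}, maximal M L & gcore M L = 1.

Definition unique_minnormal (gT : finGroupType) (L N : {set gT}) :=
  [/\ N <| L, minnormal N L &
      forall M : {group gT}, M <| L -> minnormal M L -> M :=: N].

Definition monolithic_primitive (gT : finGroupType) (L N : {set gT}) :=
  primitive L /\ unique_minnormal L N.

Definition setpow (gT : finGroupType) (k : nat) (N : {set gT}) : {set gpow gT k} :=
  [set x : gpow gT k | [forall i, x i \in N]].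

Definition crown_power (gT : finGroupType) (k : nat) (L N : {set gT})
  : {set gpow gT k} :=
  [set x : gpow gT k | [forall i, x i \in L] &&
                       [forall i, forall j, (x i)^-1 * x j \in N]].

(* Main.v *)
Require Import Defs.
From mathcomp Require Import all_boot all_fingroup all_solvable.
From mathcomp Require Import integral_char.
Set Implicit Arguments. Unset Strict Implicit. Unset Printing Implicit Defensive.
Local Open Scope group_scope.

Section Simple.
Variables (gT : finGroupType) (G : {group gT}).
Hypotheses (simG : simple G) (nabG : ~~ abelian G).

Lemma simple_primes3 : 2 < size (primes #|G|).
Proof.
rewrite ltnNge; apply/negP=> /Burnside_p_a_q_b solG.
have := simple_sol_prime solG simG => /prime_cyclic/cyclic_abelian.
by rewrite (negbTE nabG).
Qed.

Lemma simple_card25 : 25 <= #|G|.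
Proof.
have := simple_primes3; move: #|G| => n.
by do 25![case: n => [//|n]].
Qed.

Lemma simple_bigprime : exists2 p, prime p & (4 < p) && (p %| #|G|).
Proof.
have: has (fun q => 4 < q) (primes #|G|).
  apply/negPn/negP=> /hasPn allP.
  have : size (primes #|G|) <= size [:: 2; 3].
    apply: uniq_leq_size; first exact: primes_uniq.
    move=> q pq; have := allP q pq; rewrite -leqNgt.
    move: pq; rewrite mem_primes => /and3P[pq _ _].
    by move: pq; do 5![case: q => [//|q]].
  by rewrite leqNgt simple_primes3.
case/hasP=> q; rewrite mem_primes => /and3P[pq _ qG] q4.
by exists q; rewrite ?q4.
Qed.

Lemma simple_index5 (K : {group gT}) : K \proper G -> 5 * #|K| <= #|G|.
Proof.
move=> prKG; have sKG := proper_sub prKG.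
have [p pp /andP[p4 pG]] := simple_bigprime.
have [x Gx ox] := Cauchy pp pG.
rewrite leqNgt; apply/negP=> small.
have sub: <[x]> \subset gcore K G.
  apply/bigcapsP=> g Gg; apply/negPn/negP=> nsub.
  have ti : <[x]> :&: K :^ g = 1 by apply: prime_TIg; rewrite // -orderE ox.
  have := TI_cardMg ti; rewrite cardJg -orderE ox => cM.
  have: #|<[x]> * K :^ g| <= #|G|.
    apply: subset_leq_card; rewrite mulG_subG cycle_subG Gx /=.
    by rewrite -(conjGid Gg) conjSg.
  rewrite cM => le; move: small; rewrite ltnNge => /negP; apply.
  by apply: leq_trans le; rewrite leq_mul2r p4 orbT.
have /simpleP[_ simG'] := simG.
case: (simG' _ (gcore_normal sKG)) => [core1 | coreG].
  move: sub; rewrite core1 => /trivgP cx1.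
  by move: ox; rewrite /order cx1 cards1 => p1; move: pp; rewrite -p1.
move: prKG; rewrite properE => /andP[_]; case/negP.
by rewrite -coreG gcore_sub.
Qed.

End Simple.


Lemma decomp_card (gT : finGroupType) (X Y H : {group gT}) :
  X :&: Y = 1 -> Y \subset 'C(X) -> H \subset X * Y -> H \subset 'N(Y) ->
  #|H| = (#|H :&: Y| * #|X :&: (H <*> Y)|)%N.
Proof.
move=> tiXY cXY sHXY nYH.
have sHYXY : H <*> Y \subset X <*> Y.
  by rewrite join_subG joing_subr andbT /= (cent_joinEr cXY).
have eHY : (H <*> Y) :&: X * Y = H <*> Y.
  by apply/setIidPl; rewrite -(cent_joinEr cXY).
have defHY : (X :&: (H <*> Y)) * Y = H <*> Y.
  by rewrite setIC group_modr ?joing_subr // eHY.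
have ti2 : (X :&: (H <*> Y)) :&: Y = 1.
  by apply/trivgP; rewrite -tiXY setSI // subsetIl.
have c1 := mul_cardG H Y; rewrite -norm_joinEl // in c1.
have c2 := TI_cardMg ti2; rewrite defHY in c2.
have Y0 := cardG_gt0 Y.
apply/eqP; rewrite -(eqn_pmul2r Y0) c1 c2.
by rewrite mulnAC [(#|X :&: _| * _)%N]mulnC.
Qed.

Section ML.
Variables (G : finGroupType) (I : finType) (T : I -> {group G}) (C0 : {set I}).
Definition W (D : {set I}) : {group G} := (<<\bigcup_(d in D) T d>>)%G.
Definition cnt (D : {set I}) (H : {set G}) := #|[set c in D | ~~ (T c \subset H)]|.

Hypotheses
  (Tcent : forall c d, c \in C0 -> d \in C0 -> c != d -> T c \subset 'C(T d))
  (Tti : forall c (D : {set I}), c \in C0 -> D \subset C0 -> c \notin D -> T c :&: W D = 1).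

Lemma memW c (D : {set I}) : c \in D -> T c \subset W D.
Proof. by move=> cD; apply: sub_gen; apply: (bigcup_sup c). Qed.

Lemma WS (D1 D2 : {set I}) : D1 \subset D2 -> W D1 \subset W D2.
Proof.
move=> sD; rewrite /= gen_subG; apply/bigcupsP=> d dD.
by apply: memW; apply: (subsetP sD).
Qed.

Lemma W_cent j (D : {set I}) : D \subset C0 -> j \in C0 -> j \notin D -> W D \subset 'C(T j).
Proof.
move=> sD jC jD; rewrite /= gen_subG; apply/bigcupsP=> d dD.
apply: Tcent => //; first exact: (subsetP sD).
by apply: contraNneq jD => <-.
Qed.

Lemma W_norm j (D : {set I}) : D \subset C0 -> j \in D -> W D \subset 'N(T j).
Proof.
move=> sD jD; rewrite /= gen_subG; apply/bigcupsP=> d dD.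
have [-> | ne] := eqVneq d j; first exact: normG.
by apply: cents_norm; apply: Tcent => //; apply: (subsetP sD).
Qed.

Lemma W_split j (D : {set I}) : D \subset C0 -> j \in D -> W D = T j <*> W (D :\ j) :> {set G}.
Proof.
move=> sD jD; have jC := subsetP sD j jD.
have sD' : D :\ j \subset C0 by apply: subset_trans sD; apply: subsetDl.
apply/eqP; rewrite eqEsubset; apply/andP; split.
  rewrite /= gen_subG; apply/bigcupsP=> d dD.
  have [-> | ne] := eqVneq d j; first exact: joing_subl.
  apply: subset_trans (joing_subr _ _); apply: memW.
  by rewrite !inE ne.
by rewrite join_subG memW // WS // subsetDl.
Qed.

Lemma card_W j (D : {set I}) : D \subset C0 -> j \in D -> #|W D| = (#|T j| * #|W (D :\ j)|)%N.
Proof.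
move=> sD jD; have jC := subsetP sD j jD.
have sD' : D :\ j \subset C0 by apply: subset_trans sD; apply: subsetDl.
rewrite (W_split sD jD) cent_joinEr; last by apply: W_cent; rewrite // !inE eqxx.
by rewrite TI_cardMg // Tti // !inE eqxx.
Qed.

Hypotheses (Tsimple : forall c, c \in C0 -> simple (T c))
  (Tnab : forall c, c \in C0 -> ~~ abelian (T c)).

Lemma ML n : forall (D : {set I}), #|D| < n -> D \subset C0 ->
  forall H : {group G}, H \subset W D -> (5 ^ cnt D H * #|H| <= #|W D|)%N.
Proof.
elim: n => // n IHn D Dn sD H sHW.
have [|] := boolP [exists j in D, (T j \subset H) || ~~ (T j \subset H <*> W (D :\ j))].
  case/exists_inP=> j jD Pj.
  have jC := subsetP sD j jD.
  have sD' : D :\ j \subset C0 by apply: subset_trans sD; apply: subsetDl.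
  set A := W (D :\ j).
  have cA : A \subset 'C(T j) by apply: W_cent; rewrite // !inE eqxx.
  have nAH : H \subset 'N(A).
    apply: subset_trans sHW _; rewrite (W_split sD jD) join_subG.
    by rewrite cents_norm 1?centsC // normG.
  have dec := decomp_card (Tti jC sD' (negbT (setD11 _ _))) cA.
  have sHXY : H \subset T j * A by rewrite -(cent_joinEr cA) -(W_split sD jD).
  have {dec}dec := dec H sHXY nAH.
  have sHA : (H :&: A)%G \subset W (D :\ j) by rewrite subsetIr.
  have IH := IHn (D :\ j) _ sD' _ sHA.
  have {IH}IH : (5 ^ cnt (D :\ j) (H :&: A) * #|H :&: A| <= #|A|)%N.
    by apply: IH; rewrite (cardsD1 j D) jD in Dn.
  rewrite (card_W sD jD) dec.
  have cntle1 : (cnt D H <= (cnt (D :\ j) (H :&: A)).+1)%N.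
    apply: (@leq_trans #|j |: [set c in D :\ j | ~~ (T c \subset H :&: A)]|).
      apply: subset_leq_card; apply/subsetP=> c.
      rewrite !inE => /andP[cD ncH].
      have [//|ne] := eqVneq c j.
      rewrite cD /=; apply: contra ncH => ss.
      by apply: subset_trans ss (subsetIl _ _).
    by rewrite cardsU1 -add1n leq_add2r leq_b1.
  have cntle0 : T j \subset H -> (cnt D H <= cnt (D :\ j) (H :&: A))%N.
    move=> sTH; apply: subset_leq_card; apply/subsetP=> c.
    rewrite !inE => /andP[cD ncH].
    have [ej|ne] := eqVneq c j; first by rewrite ej sTH in ncH.
    rewrite cD /=; apply: contra ncH => ss.
    by apply: subset_trans ss (subsetIl _ _).
  case/orP: Pj => [sTH | nsT].
    have e : T j :&: (H <*> A) = T j.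
      by apply/setIidPl; apply: subset_trans sTH (joing_subl _ _).
    have cntle := cntle0 sTH; rewrite e.
    rewrite mulnA [X in (_ <= X)%N]mulnC leq_mul2r; apply/orP; right.
    by apply: leq_trans IH; rewrite leq_mul2r leq_exp2l // cntle orbT.
  have prop : (T j :&: (H <*> A))%G \proper T j.
    rewrite properE subsetIl /=; apply: contra nsT => ss.
    by apply: subset_trans ss (subsetIr _ _).
  have i5 := simple_index5 (Tsimple jC) (Tnab jC) prop.
  have ns : ~~ (T j \subset H).
    by apply: contra nsT => ss; apply: subset_trans ss (joing_subl _ _).
  have cntle := cntle1.
  apply: (@leq_trans (5 ^ (cnt (D :\ j) (H :&: A)).+1 * (#|H :&: A| * #|T j :&: (H <*> A)|))).
    by rewrite leq_mul2r leq_exp2l // cntle orbT.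
  rewrite expnS [(5 * _)%N]mulnC mulnACA [X in (_ <= X)%N]mulnC.
  exact: leq_mul IH i5.
rewrite negb_exists_in => /forall_inP allP.
case: (set_0Vmem D) => [D0 | [m mD]].
  have -> : cnt D H = 0.
    apply/eqP; rewrite cards_eq0; apply/eqP/setP=> c; rewrite !inE D0 inE.
    by [].
  by rewrite expn0 mul1n; apply: subset_leq_card.
have mC := subsetP sD m mD.
have sD' : D :\ m \subset C0 by apply: subset_trans sD; apply: subsetDl.
set A := W (D :\ m).
have := allP m mD; rewrite negb_or negbK => /andP[nmH smHA].
have cA : A \subset 'C(T m) by apply: W_cent; rewrite // !inE eqxx.
have cTA : T m \subset 'C(A) by rewrite centsC.
have nTH : H \subset 'N(T m) by apply: subset_trans sHW (W_norm sD mD).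
have tiAT : A :&: T m = 1 by rewrite setIC; apply: Tti; rewrite // !inE eqxx.
have sHXY : H \subset A * T m.
  by rewrite -(cent_joinEr cTA) joingC -(W_split sD mD).
have dec := decomp_card tiAT cTA sHXY nTH.
have HT1 : H :&: T m = 1.
  have nrm : (H :&: T m)%G <| T m.
    rewrite /normal subsetIr /=; apply: subset_trans smHA _.
    rewrite join_subG normsI ?normG //=.
    by apply: cents_norm; apply: subset_trans cA (centS (subsetIr _ _)).
  have /simpleP[_ simT] := Tsimple mC.
  case: (simT _ nrm) => [-> //| e].
  by case/negP: nmH; rewrite -e subsetIl.
rewrite HT1 cards1 mul1n in dec.
set P := (A :&: (H <*> T m))%G.
have sPA : P \subset W (D :\ m) by rewrite subsetIl.
have IH : (5 ^ cnt (D :\ m) P * #|P| <= #|A|)%N.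
  by apply: IHn sPA; rewrite (cardsD1 m D) mD in Dn.
have Ufull : forall c, c \in D :\ m -> T c \subset P -> T m \subset H <*> T c.
  move=> c; rewrite inE => /andP[ne cD] sTP.
  have cC := subsetP sD c cD.
  have nTcH : H \subset 'N(T c) by apply: subset_trans sHW (W_norm sD cD).
  have := allP c cD; rewrite negb_or negbK => /andP[ncH _].
  have nrm : (T m :&: (H <*> T c))%G <| T m.
    rewrite /normal subsetIl /=; apply: subset_trans smHA _.
    rewrite join_subG normsI ?normG //=.
      by apply: cents_norm; apply: subset_trans cA (centS (subsetIl _ _)).
    by apply: subset_trans (joing_subl H (T c)) (normG _).
  have /simpleP[_ simT] := Tsimple mC.
  case: (simT _ nrm) => [U1 | e]; last by rewrite -e subsetIr.
  case/subsetPn: ncH => x Tx nHx.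
  have : x \in H * T m by rewrite -norm_joinEl // (subsetP (subsetIr A _)) // (subsetP sTP).
  case/mulsgP=> h t Hh Tt ex.
  have tU : t \in T m :&: (H <*> T c).
    rewrite inE Tt /=; have -> : t = h^-1 * x by rewrite ex mulKg.
    by apply: groupM; [rewrite groupV; apply: (subsetP (joing_subl _ _)) | apply: (subsetP (joing_subr _ _))].
  by move: tU; rewrite U1 inE => /eqP t1; case/negP: nHx; rewrite ex t1 mulg1.
have B1 : (#|[set c in D :\ m | T c \subset P]| <= 1)%N.
  apply/card_le1_eqP=> c1 c2; rewrite !inE => /andP[/andP[n1 c1D] s1] /andP[/andP[n2 c2D] s2].
  apply/eqP/negPn/negP=> ne12.
  have U1 : T m \subset H <*> T c1 by apply: Ufull s1; rewrite !inE n1 c1D.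
  have U2 : T m \subset H <*> T c2 by apply: Ufull s2; rewrite !inE n2 c2D.
  have c1C := subsetP sD c1 c1D; have c2C := subsetP sD c2 c2D.
  have nT1H : H \subset 'N(T c1) by apply: subset_trans sHW (W_norm sD c1D).
  have nT2H : H \subset 'N(T c2) by apply: subset_trans sHW (W_norm sD c2D).
  case/negP: (Tnab mC); apply/centsP=> t Tt t' Tt'.
  have : t \in H * T c1 by rewrite -norm_joinEl // (subsetP U1).
  case/mulsgP=> h x Hh Tx et.
  have : t' \in H * T c2 by rewrite -norm_joinEl // (subsetP U2).
  case/mulsgP=> h' y Hh' Ty et'.
  have eh : h = t * x^-1 by rewrite et mulgK.
  have eh' : h' = t' * y^-1 by rewrite et' mulgK.
  have cx : commute x^-1 t'.
    by apply: (centsP (Tcent c1C mC n1)); rewrite ?groupV.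
  have cy : commute y^-1 t.
    by apply: (centsP (Tcent c2C mC n2)); rewrite ?groupV.
  have cxy : commute y^-1 x^-1.
    by apply: (centsP (Tcent c2C c1C _)); rewrite ?groupV // eq_sym.
  have e1 : h * h' = (t * t') * (x^-1 * y^-1).
    by rewrite eh eh' !mulgA -[t * x^-1 * t']mulgA cx !mulgA.
  have e2 : h' * h = (t' * t) * (x^-1 * y^-1).
    by rewrite eh eh' !mulgA -[t' * y^-1 * t]mulgA cy !mulgA -[t' * t * y^-1 * x^-1]mulgA cxy !mulgA.
  have ez : (t * t') * (t' * t)^-1 = (h * h') * (h' * h)^-1.
    have gen : forall a b s : G, (a * s) * (b * s)^-1 = a * b^-1.
      by move=> a b s; rewrite invMg mulgA mulgK.
    by rewrite e1 e2 gen.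
  have zH : (t * t') * (t' * t)^-1 \in H :&: T m.
    by rewrite inE {1}ez !(groupM, groupV).
  rewrite HT1 inE in zH.
  by apply/eqP; rewrite eq_mulgV1.
have cntle : (cnt D H <= (cnt (D :\ m) P).+2)%N.
  apply: (@leq_trans #|D|); first by apply: subset_leq_card; apply/subsetP=> c; rewrite inE => /andP[].
  rewrite (cardsD1 m D) mD add1n ltnS.
  apply: (@leq_trans #|[set c in D :\ m | T c \subset P] :|: [set c in D :\ m | ~~ (T c \subset P)]|).
    apply: subset_leq_card; apply/subsetP=> c cD; rewrite !inE; move: cD; rewrite !inE => /andP[-> ->].
    by case: (T c \subset P).
  apply: leq_trans (leq_card_setU _ _) _.
  by rewrite -add1n leq_add2r.
rewrite (card_W sD mD) dec.
apply: (@leq_trans (25 * (5 ^ cnt (D :\ m) P * #|P|))).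
  by rewrite mulnA leq_mul2r -[25]/((5 ^ 2)%N) -expnD leq_exp2l // addnC addn2 cntle orbT.
exact: leq_mul (simple_card25 (Tsimple mC) (Tnab mC)) IH.
Qed.

End ML.


Section GP.
Variables (gT : finGroupType) (k : nat).
Lemma gpowM (x y : gpow gT k) i : (x * y) i = x i * y i.
Proof. by rewrite /= ffunE. Qed.
Lemma gpow1 i : (1 : gpow gT k) i = 1.
Proof. by rewrite /= ffunE. Qed.
Lemma gpowV (x : gpow gT k) i : (x^-1) i = (x i)^-1.
Proof. by rewrite /= ffunE. Qed.
Lemma gpowJ (x y : gpow gT k) i : (x ^ y) i = x i ^ y i.
Proof. by rewrite /conjg !gpowM gpowV. Qed.
Definition ginj (i : 'I_k) (x : gT) : gpow gT k := [ffun l => if l == i then x else 1].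
Lemma ginjM i : {in [set: gT] &, {morph ginj i : x y / x * y}}.
Proof. move=> x y _ _; apply/ffunP=> l; rewrite gpowM !ffunE; case: eqP => // _; by rewrite mulg1. Qed.
Canonical ginj_morph i := Morphism (ginjM i).
Definition gproj (i : 'I_k) (x : gpow gT k) : gT := x i.
Lemma gprojM i : {in [set: gpow gT k] &, {morph gproj i : x y / x * y}}.
Proof. by move=> x y _ _; rewrite /gproj gpowM. Qed.
Canonical gproj_morph i := Morphism (gprojM i).

Lemma injm_ginj i : 'injm (ginj i).
Proof.
apply/injmP=> x y _ _ /(congr1 (fun z : gpow gT k => z i)).
by rewrite !ffunE eqxx.
Qed.

Lemma ginj_in i (A : {set gT}) u : u \in ginj i @* A -> exists2 a, a \in A & u = ginj i a.
Proof. by case/morphimP=> a _ Aa ->; exists a. Qed.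

Lemma mem_ginj i (A : {set gT}) a : a \in A -> ginj i a \in ginj i @* A.
Proof. by move=> Aa; apply: mem_morphim; rewrite ?inE. Qed.

Lemma prod_eval (F : 'I_k -> gpow gT k) l :
  (\prod_(i < k) F i) l = \prod_(i < k) F i l.
Proof.
elim/big_rec2: _ => [|i y1 y2 _ <-]; first by rewrite gpow1.
by rewrite gpowM.
Qed.

Lemma prod_ginj (x : gpow gT k) : x = \prod_(i < k) ginj i (x i).
Proof.
apply/ffunP=> l; rewrite prod_eval (@big_only1 _ _ _ _ l) //= ?ffunE ?eqxx //.
by move=> j ne _; rewrite ffunE eq_sym (negbTE ne).
Qed.

Lemma setpow_group_set (N : {group gT}) : group_set (setpow k N).
Proof.
apply/group_setP; split.
  by rewrite inE; apply/forallP=> i; rewrite gpow1 group1.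
move=> x y; rewrite !inE => /forallP xN /forallP yN; apply/forallP=> i.
by rewrite gpowM groupM.
Qed.
Canonical setpow_group N := Group (setpow_group_set N).

End GP.

Section Main.
Variables (gT : finGroupType) (L N : {group gT}) (k : nat) (H : {group gpow gT k}).
Hypotheses (mpL : monolithic_primitive L N) (nabN : ~~ abelian N)
  (sHN : H \subset setpow k N) (coreH : gcore H (crown_power k L N) = 1).

Lemma mainproof : (5 ^ k <= #|setpow k N : H|)%N.
Proof.
have [_ [nNL minN _]] := mpL.
have ntN : N :!=: 1 by case/mingroupp/andP: minN.
have [S [sSN simS [I AutI defN]]] := charsimple_dprod (minnormal_charsimple minN).
have defNY := bigdprodWY defN.
have FsubN : forall f, f \in I -> f @: S \subset N.
  by move=> f fI; rewrite -defNY; apply: sub_gen; apply: (bigcup_sup f).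
have Fgrp : forall f, f \in I -> exists Af : f \in Aut N, f @: S = autm Af @* S.
  move=> f fI; have Af := subsetP AutI f fI; exists Af.
  by rewrite morphimEsub // autmE.
have FG : forall f, f \in I -> <<f @: S>> = f @: S.
  by move=> f fI; have [Af ->] := Fgrp f fI; rewrite genGid.
have Fiso : forall f, f \in I -> S \isog generated_group (f @: S).
  move=> f fI; have [Af e] := Fgrp f fI.
  have -> : generated_group (f @: S) = (autm Af @* S)%G by apply: val_inj; rewrite /= FG // e.
  exact: sub_isog sSN (injm_autm Af).
have Fsplit : forall f, f \in I -> exists R : {group gT},
    [/\ (forall g, g \in I -> g != f -> g @: S \subset R),
       R \subset 'C(f @: S) & f @: S :&: R = 1].
  move=> f fI; move: defN; rewrite (bigD1 f) //=.
  case/dprodP=> [[K R defK defR] _ cFR tiFR]; exists R; split; [| by rewrite -defR | by rewrite -defR].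
  move=> g gI ne; rewrite -(bigdprodWY defR); apply: sub_gen.
  by apply: (bigcup_sup g); rewrite gI ne.
have Fcent : forall f g, f \in I -> g \in I -> f != g -> f @: S \subset 'C(g @: S).
  move=> f g fI gI ne; have [R [sR cR _]] := Fsplit g gI.
  by apply: subset_trans (sR f fI ne) cR.
have nabS : ~~ abelian S.
  apply: contra nabN => abS; rewrite -defNY abelian_gen.
  apply/centsP=> x /bigcupP[f fI xf] y /bigcupP[g gI yg].
  have [e | ne] := eqVneq g f.
    subst g; move/isog_abelian: (Fiso f fI); rewrite abS /= FG // => /esym abF.
    exact: (centsP abF).
  by apply: (centsP (Fcent f g fI gI _)); rewrite // eq_sym.
pose Fg (f : {perm gT}) := generated_group (f @: S).
pose T (c : 'I_k * {perm gT}) := (ginj c.1 @* Fg c.2)%G.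
pose C0 := [set c : 'I_k * {perm gT} | c.2 \in I].
have TE : forall i f, f \in I -> T (i, f) = ginj i @* (f @: S) :> {set _}.
  by move=> i f fI; rewrite /T /= FG.
have Tiso : forall c, c \in C0 -> S \isog T c.
  move=> [i f]; rewrite inE /= => fI; apply: isog_trans (Fiso f fI) _.
  exact: sub_isog (subsetT _) (injm_ginj _ _).
have Tsimple : forall c, c \in C0 -> simple (T c).
  by move=> c cC; rewrite -(isog_simple (Tiso c cC)).
have Tnab : forall c, c \in C0 -> ~~ abelian (T c).
  by move=> c cC; rewrite -(isog_abelian (Tiso c cC)).
have Tcent : forall c d, c \in C0 -> d \in C0 -> c != d -> T c \subset 'C(T d).
  move=> [i f] [j g]; rewrite !inE /= => fI gI; rewrite xpair_eqE.
  have [eij | nij] := eqVneq i j => /= ne.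
    subst j; rewrite /T /=; apply: morphim_cents; rewrite !FG //.
    exact: Fcent.
  apply/centsP=> u /ginj_in[a _ ->] v /ginj_in[b _ ->].
  apply/ffunP=> l; rewrite !gpowM !ffunE.
  have [li | li] := eqVneq l i; have [lj | lj] := eqVneq l j => //.
  - by move: nij; rewrite -li -lj eqxx.
  - by rewrite mulg1 mul1g.
  - by rewrite mulg1 mul1g.
have Tti : forall c (D : {set 'I_k * {perm gT}}), c \in C0 -> D \subset C0 -> c \notin D ->
    T c :&: W T D = 1.
  move=> [i f] D; rewrite inE /= => fI sD nD.
  have [R [sR cR tiR]] := Fsplit f fI.
  have sWX : W T D \subset gproj i @*^-1 R.
    rewrite /= gen_subG; apply/bigcupsP=> [[j g]] dD.
    have gI : g \in I by have := subsetP sD _ dD; rewrite inE.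
    apply/subsetP=> u /ginj_in[a]; rewrite /= FG // => aS ->.
    rewrite !inE /= /gproj ffunE.
    have [ij | nij] := eqVneq i j; last by rewrite group1.
    subst j; apply: (subsetP (sR g gI _)) => //.
    by apply: contraNneq nD => e; rewrite -e.
  apply/trivgP/subsetP=> u /setIP[uT uW].
  move: uT; rewrite /T /= FG // => /ginj_in[a aS eu].
  have := subsetP sWX u uW; rewrite !inE /= /gproj eu ffunE eqxx => aR.
  have : a \in f @: S :&: R by rewrite inE aS.
  by rewrite tiR inE => /eqP ->; rewrite morph1.
have ML' := ML Tcent Tti Tsimple Tnab.
have NsubW : forall i (K : {group gpow gT k}),
    (forall f, f \in I -> T (i, f) \subset K) -> ginj i @* N \subset K.
  move=> i K sTK; rewrite sub_morphim_pre ?subsetT // -defNY gen_subG.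
  apply/bigcupsP=> f fI; rewrite -sub_morphim_pre ?subsetT //.
  by rewrite -TE // sTK.
have WC0 : W T C0 = setpow k N :> {set _}.
  apply/eqP; rewrite eqEsubset; apply/andP; split.
    rewrite /= gen_subG; apply/bigcupsP=> [[i f]]; rewrite inE /= => fI.
    apply/subsetP=> u; rewrite TE // => /ginj_in[a aS ->].
    rewrite inE; apply/forallP=> l; rewrite ffunE.
    by case: (l == i); rewrite ?group1 // (subsetP (FsubN f fI)).
  apply/subsetP=> x; rewrite inE => /forallP xN.
  rewrite (prod_ginj x); apply: group_prod => i _.
  apply: (subsetP (NsubW i (W T C0) _)); first by move=> f fI; apply: memW; rewrite inE.
  exact: mem_ginj.
have sHW : H \subset W T C0 by rewrite WC0.
have bound := ML' _ _ (ltnSn _) (subxx _) _ sHW.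
have cntk : (k <= cnt T C0 H)%N.
  have ex : forall i, exists f, (f \in I) && ~~ (T (i, f) \subset H).
    move=> i; have [/existsP //|] := boolP [exists f, (f \in I) && ~~ (T (i, f) \subset H)]; rewrite negb_exists => /forallP allf.
    have sNH : ginj i @* N \subset H.
      by apply: NsubW => f fI; have := allf f; rewrite fI /= negbK.
    have nNi : ginj i @* N \subset gcore H (crown_power k L N).
      apply/bigcapsP=> g; rewrite inE => /andP[/forallP gL _].
      apply/subsetP=> _ /ginj_in[a aN ->].
      have -> : ginj i a = (ginj i (a ^ (g i)^-1)) ^ g.
        apply/ffunP=> l; rewrite gpowJ !ffunE.
        by case: eqP => [->|_]; rewrite ?conj1g // conjgKV.
      rewrite memJ_conjg; apply: (subsetP sNH); apply: mem_ginj.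
      by rewrite memJ_norm // groupV (subsetP (normal_norm nNL)).
    move: nNi; rewrite coreH => /trivgP.
    move/(congr1 (fun A : {set _} => #|A|)); rewrite card_injm ?subsetT ?injm_ginj // cards1.
    by move/eqP; rewrite -trivg_card1 (negbTE ntN).
  pose fi i := xchoose (ex i).
  have fiP i : (fi i \in I) && ~~ (T (i, fi i) \subset H) := xchooseP (ex i).
  apply: (@leq_trans #|'I_k|); first by rewrite card_ord.
  rewrite -(card_imset (mem 'I_k) (f := fun i => (i, fi i))); last first.
    by move=> i j [].
  apply: subset_leq_card; apply/subsetP=> _ /imsetP[i _ ->].
  by rewrite !inE /=.
rewrite WC0 -(Lagrange sHN) [X in (_ <= X)%N]mulnC leq_pmul2r ?cardG_gt0 // in bound.
by apply: leq_trans bound; rewrite leq_exp2l.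
Qed.
End Main.


Theorem lemma2p1 (gT : finGroupType) (L N : {group gT}) (k : nat)
  (H : {group gpow gT k}) :
  monolithic_primitive L N ->
  ~~ abelian N ->
  0 < k ->
  H \subset setpow k N ->
  gcore H (crown_power k L N) = 1 ->
  5 ^ k <= #|setpow k N : H|.
Proof.
move=> mpL nabN _ sHN coreH; exact: (mainproof mpL nabN sHN coreH).
Qed.
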